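(* Let $G$ be an abelian group and $A$ an algebra in ${}^{G}_{G}\mathcal{YD}$ which is semisimple as a $\mathbb{C}$-algebra. Let $K\subset A$ be a central subfield which is invariant (i.e. $G$-fixed and of trivial $G$-degree) and over which $A$ is finite-dimensional. Then $A$ is projective as a right module over $A^{\underline{op}}\underline{\otimes}_K A$, where $A$ is a module via $m\cdot(a\otimes b)=(m_{-1}\cdot a)m_0b$.
   Context: ${}^{G}_{G}\mathcal{YD}$ is the category of Yetter–Drinfeld modules over $\mathbb{C}G$: $G$-modules with a $\mathbb{C}G$-coaction $v\mapsto v_{-1}\otimes v_0$ (for $G$ abelian, action and coaction commute), with braiding $v\otimes w\mapsto (v_{-1}w)\otimes v_0$. For algebras $A,B$ in this category, the braided tensor product $A\underline{\otimes}B$ has product $(a\otimes b)(a'\otimes b')=a(b_{-1}a')\otimes b_0b'$; $A^{\underline{op}}$ is $A$ with product $a\cdot_{\underline{op}}b=(a_{-1}b)a_0$; $A^{\underline{op}}\underline{\otimes}_KA$ is the analogous braided tensor product over $K$. *)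

(* Defs.v *)
From HB Require Import structures.
From mathcomp Require Import all_boot all_order all_algebra.
From mathcomp Require Import reals Rstruct complex.
Set Implicit Arguments. Unset Strict Implicit. Unset Printing Implicit Defensive.
Import GRing.Theory.
Local Open Scope ring_scope.

Definition CC : numClosedFieldType := (Rdefinitions.R)[i].

Section YD.
(* G : an abelian group (written additively: identity 0, group law +).
   A : a (unital, associative) C-algebra.
   act g a   : the G-action on A.
   comp a g  : the g-homogeneous component of a; the CG-coaction is
               a |-> a_{-1} (x) a_0 = \sum_(g <- supp a) g (x) comp a g,
   where supp a is a duplicate-free list containing every g with
   comp a g <> 0 (the value of every sum below does not depend on the choice
   of such a list, since comp a g = 0 outside it). *)
Variables (G : zmodType) (A : algType CC).
Variables (act : G -> A -> A) (comp : A -> G -> A) (supp : A -> seq G).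

Definition is_YD_algebra : Prop :=
  [/\ (forall a, act 0 a = a),
      (forall g h a, act (g + h) a = act g (act h a)),
      (forall g (c : CC) a b, act g (c *: a + b) = c *: act g a + act g b) &
   [/\ (forall g (c : CC) a b, comp (c *: a + b) g = c *: comp a g + comp b g),
      (forall a, uniq (supp a) /\ (forall g, g \notin supp a -> comp a g = 0)),
      (forall a, \sum_(g <- supp a) comp a g = a) &
      (forall a g h, comp (comp a g) h = if h == g then comp a g else 0) ]] /\
  (* Yetter-Drinfeld compatibility (for G abelian: action and coaction commute) *)
  [/\ (forall g a h, comp (act g a) h = act g (comp a h)),
      (forall g a b, act g (a * b) = act g a * act g b),
      (forall g, act g 1 = 1),
      (forall g, comp 1 g = if g == 0 then 1 else 0) &
      (forall a b g h, comp a g = a -> comp b h = b -> comp (a * b) (g + h) = a * b) ].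

(* The braided opposite product  a .op b = (a_{-1} . b) a_0. *)
Definition opmul (a b : A) : A := \sum_(g <- supp a) act g b * comp a g.

Definition central_subfield (K : pred A) : Prop :=
  [/\ (forall c : CC, c%:A \in K),
      (forall x y, x \in K -> y \in K -> x - y \in K),
      (forall x y, x \in K -> y \in K -> x * y \in K),
      (forall x, x \in K -> x != 0 -> exists2 y, y \in K & x * y = 1) &
      (forall x a, x \in K -> x * a = a * x) ].

Definition invariant_sub (K : pred A) : Prop :=
  forall k, k \in K -> (forall g, act g k = k) /\ comp k 0 = k.

Definition findim_over (K : pred A) : Prop :=
  exists s : seq A, forall a, exists c : seq A,
    all (fun x => x \in K) c /\ a = \sum_(i < size s) c`_i * s`_i.

Definition left_ideal (I : pred A) : Prop :=
  [/\ 0 \in I, (forall x y, x \in I -> y \in I -> x + y \in I) &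
      (forall a x, x \in I -> a * x \in I)].

Definition semisimple_alg : Prop :=
  forall I : pred A, left_ideal I ->
    exists J : pred A, [/\ left_ideal J,
      (forall x, x \in I -> x \in J -> x = 0) &
      (forall a, exists x y, [/\ x \in I, y \in J & a = x + y])].

(* A right B-module M is the same thing as an abelian group M with
   rho m a = m.(a (x) 1)  and  sig m b = m.(1 (x) b), subject to the relations
   of B:  (a (x) 1)(a' (x) 1) = (a .op a') (x) 1,  (1 (x) b)(1 (x) b') = 1 (x) bb',
   (a (x) 1)(1 (x) b) = a (x) b,  (1 (x) b)(a' (x) 1) = (b_{-1} a') (x) b_0,
   biadditivity, and K-balancedness k (x) 1 = 1 (x) k; then
   m.(a (x) b) = sig (rho m a) b. *)
Definition is_rBmod (K : pred A) (M : zmodType) (rho sig : M -> A -> M) : Prop :=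
  [/\ (forall m m' a, rho (m + m') a = rho m a + rho m' a),
      (forall m a a', rho m (a + a') = rho m a + rho m a'),
      (forall m m' b, sig (m + m') b = sig m b + sig m' b),
      (forall m b b', sig m (b + b') = sig m b + sig m b') &
   [/\ (forall m, rho m 1 = m),
      (forall m, sig m 1 = m) &
   [/\ (forall m a a', rho (rho m a) a' = rho m (opmul a a')),
       (forall m b b', sig (sig m b) b' = sig m (b * b')),
       (forall m b a', rho (sig m b) a'
                        = \sum_(g <- supp b) sig (rho m (act g a')) (comp b g)) &
       (forall m k, k \in K -> rho m k = sig m k)]]].

Definition is_rBhom (M N : zmodType) (rhoM sigM : M -> A -> M)
  (rhoN sigN : N -> A -> N) (f : M -> N) : Prop :=
  [/\ (forall m m', f (m + m') = f m + f m'),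
      (forall m a, f (rhoM m a) = rhoN (f m) a) &
      (forall m b, f (sigM m b) = sigN (f m) b)].

Definition rB_projective (K : pred A) (P : zmodType) (rhoP sigP : P -> A -> P) : Prop :=
  forall (M N : zmodType) (rhoM sigM : M -> A -> M) (rhoN sigN : N -> A -> N)
         (p : M -> N) (f : P -> N),
    is_rBmod K rhoM sigM -> is_rBmod K rhoN sigN ->
    is_rBhom rhoM sigM rhoN sigN p -> (forall n, exists m, p m = n) ->
    is_rBhom rhoP sigP rhoN sigN f ->
    exists h : P -> M, is_rBhom rhoP sigP rhoM sigM h /\ (forall x, p (h x) = f x).

Definition A_rho (m a : A) : A := opmul m a.
Definition A_sig (m b : A) : A := m * b.

End YD.

(* Main.v *)
Require Import Defs.
From HB Require Import structures.
From mathcomp Require Import all_boot all_order all_algebra.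
From mathcomp Require Import reals Rstruct complex.
Set Implicit Arguments. Unset Strict Implicit. Unset Printing Implicit Defensive.
Import GRing.Theory Num.Theory.
Local Open Scope ring_scope.

Section Main.
Variables (G : zmodType) (A : algType CC).
Variables (act : G -> A -> A) (comp : A -> G -> A) (supp : A -> seq G) (K : pred A).
Hypothesis YD : is_YD_algebra act comp supp.
Hypothesis CK : central_subfield K.
Hypothesis IK : invariant_sub act comp K.
Hypothesis SS : semisimple_alg A.
Hypothesis FD : findim_over K.

Lemma act0 a : act 0 a = a. Proof. by move: YD; rewrite /is_YD_algebra => -[[H _ _ _] _]; apply: H. Qed.
Lemma actD g h a : act (g + h) a = act g (act h a). Proof. by move: YD; rewrite /is_YD_algebra => -[[_ H _ _] _]; apply: H. Qed.
Lemma actL g c a b : act g (c *: a + b) = c *: act g a + act g b. Proof. by move: YD; rewrite /is_YD_algebra => -[[_ _ H _] _]; apply: H. Qed.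
Lemma compL g c a b : comp (c *: a + b) g = c *: comp a g + comp b g.
Proof. by move: YD; rewrite /is_YD_algebra => -[[_ _ _ [H _ _ _]] _]; apply: H. Qed.
Lemma supp_uniq a : uniq (supp a). Proof. by move: YD; rewrite /is_YD_algebra => -[[_ _ _ [_ H _ _]] _]; case: (H a). Qed.
Lemma supp_out a g : g \notin supp a -> comp a g = 0.
Proof. by move: YD; rewrite /is_YD_algebra => -[[_ _ _ [_ H _ _]] _]; case: (H a) => _; apply. Qed.
Lemma comp_sum a : \sum_(g <- supp a) comp a g = a. Proof. by move: YD; rewrite /is_YD_algebra => -[[_ _ _ [_ _ H _]] _]; apply: H. Qed.
Lemma comp_comp a g h : comp (comp a g) h = if h == g then comp a g else 0.
Proof. by move: YD; rewrite /is_YD_algebra => -[[_ _ _ [_ _ _ H]] _]; apply: H. Qed.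
Lemma comp_act g a h : comp (act g a) h = act g (comp a h). Proof. by move: YD; rewrite /is_YD_algebra => -[_ [H _ _ _ _]]; apply: H. Qed.
Lemma actM g a b : act g (a * b) = act g a * act g b. Proof. by move: YD; rewrite /is_YD_algebra => -[_ [_ H _ _ _]]; apply: H. Qed.
Lemma act1 g : act g 1 = 1. Proof. by move: YD; rewrite /is_YD_algebra => -[_ [_ _ H _ _]]; apply: H. Qed.
Lemma comp1 g : comp 1 g = if g == 0 then 1 else 0. Proof. by move: YD; rewrite /is_YD_algebra => -[_ [_ _ _ H _]]; apply: H. Qed.
Lemma compM a b g h : comp a g = a -> comp b h = b -> comp (a * b) (g + h) = a * b.
Proof. by move: YD; rewrite /is_YD_algebra => -[_ [_ _ _ _ H]]; apply: H. Qed.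

Lemma compD a b g : comp (a + b) g = comp a g + comp b g.
Proof. by have := compL g 1 a b; rewrite !scale1r. Qed.
Lemma comp0 g : comp 0 g = 0.
Proof. by have := compD 0 0 g; rewrite addr0 => /(congr1 (fun x => x - comp 0 g)); rewrite subrr addrK => /esym. Qed.
Lemma compN a g : comp (- a) g = - comp a g.
Proof. by rewrite -(addr0 (- a)) -scaleN1r compL comp0 addr0 scaleN1r. Qed.
Lemma compZ c a g : comp (c *: a) g = c *: comp a g.
Proof. by rewrite -(addr0 (c *: a)) compL comp0 addr0. Qed.
Lemma comp_big (I : Type) (r : seq I) (P : pred I) (F : I -> A) g :
  comp (\sum_(i <- r | P i) F i) g = \sum_(i <- r | P i) comp (F i) g.
Proof. by apply: (big_morph (comp^~ g)) => [x y|]; rewrite ?compD ?comp0. Qed.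
Lemma actD2 g a b : act g (a + b) = act g a + act g b.
Proof. by have := actL g 1 a b; rewrite !scale1r. Qed.
Lemma actz g : act g 0 = 0.
Proof. by have := actD2 g 0 0; rewrite addr0 => /(congr1 (fun x => x - act g 0)); rewrite subrr addrK => /esym. Qed.

Lemma KC (c : CC) : c%:A \in K. Proof. by move: CK; rewrite /central_subfield => -[H _ _ _ _]; apply: H. Qed.
Lemma K0 : (0 : A) \in K. Proof. by have := KC 0; rewrite scale0r. Qed.
Lemma K1 : (1 : A) \in K. Proof. by have := KC 1; rewrite scale1r. Qed.
Lemma KB x y : x \in K -> y \in K -> x - y \in K. Proof. by move: CK; rewrite /central_subfield => -[_ H _ _ _]; apply: H. Qed.
Lemma KM x y : x \in K -> y \in K -> x * y \in K. Proof. by move: CK; rewrite /central_subfield => -[_ _ H _ _]; apply: H. Qed.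
Lemma KN x : x \in K -> - x \in K. Proof. by move=> Hx; have := KB K0 Hx; rewrite sub0r. Qed.
Lemma KD x y : x \in K -> y \in K -> x + y \in K.
Proof. by move=> Hx Hy; have := KB Hx (KN Hy); rewrite opprK. Qed.
Lemma Kinv x : x \in K -> x != 0 -> exists2 y, y \in K & x * y = 1. Proof. by move: CK; rewrite /central_subfield => -[_ _ _ H _]; apply: H. Qed.
Lemma Kcomm x a : x \in K -> x * a = a * x. Proof. by move: CK; rewrite /central_subfield => -[_ _ _ _ H]; apply: H. Qed.
Lemma Ksum (I : Type) (r : seq I) (P : pred I) (F : I -> A) :
  (forall i, P i -> F i \in K) -> \sum_(i <- r | P i) F i \in K.
Proof. by move=> H; apply: (big_ind (fun x => x \in K)); [exact: K0 | exact: KD | ]. Qed.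
Lemma Kact k g : k \in K -> act g k = k. Proof. by move=> /IK []. Qed.
Lemma Kcomp0 k : k \in K -> comp k 0 = k. Proof. by move=> /IK []. Qed.

Definition Kt := {x : A | x \in K}.
HB.instance Definition _ := Choice.on Kt.
Definition kzero : Kt := exist _ 0 K0.
Definition kone : Kt := exist _ 1 K1.
Definition kadd (x y : Kt) : Kt := exist _ (val x + val y) (KD (valP x) (valP y)).
Definition kopp (x : Kt) : Kt := exist _ (- val x) (KN (valP x)).
Definition kmul (x y : Kt) : Kt := exist _ (val x * val y) (KM (valP x) (valP y)).

Lemma kaddA : associative kadd. Proof. by move=> x y z; apply: val_inj; rewrite /= addrA. Qed.
Lemma kaddC : commutative kadd. Proof. by move=> x y; apply: val_inj; rewrite /= addrC. Qed.
Lemma kadd0 : left_id kzero kadd. Proof. by move=> x; apply: val_inj; rewrite /= add0r. Qed.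
Lemma kaddN : left_inverse kzero kopp kadd. Proof. by move=> x; apply: val_inj; rewrite /= addNr. Qed.
HB.instance Definition _ := GRing.isZmodule.Build Kt kaddA kaddC kadd0 kaddN.

Lemma kmulA : associative kmul. Proof. by move=> x y z; apply: val_inj; rewrite /= mulrA. Qed.
Lemma kmulC : commutative kmul. Proof. by move=> x y; apply: val_inj; rewrite /= (Kcomm _ (valP x)). Qed.
Lemma kmul1 : left_id kone kmul. Proof. by move=> x; apply: val_inj; rewrite /= mul1r. Qed.
Lemma kmulD : left_distributive kmul (@GRing.add Kt). Proof. by move=> x y z; apply: val_inj; rewrite /= mulrDl. Qed.
Lemma kone0 : kone != 0.
Proof. by apply/eqP => /(congr1 val) /= /eqP; rewrite oner_eq0. Qed.
HB.instance Definition _ := GRing.Zmodule_isComNzRing.Build Kt kmulA kmulC kmul1 kmulD kone0.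

Lemma valD (x y : Kt) : val (x + y) = val x + val y. Proof. by []. Qed.
Lemma valM (x y : Kt) : val (x * y) = val x * val y. Proof. by []. Qed.
Lemma val0 : val (0 : Kt) = 0. Proof. by []. Qed.
Lemma val1 : val (1 : Kt) = 1. Proof. by []. Qed.
Lemma valN (x : Kt) : val (- x) = - val x. Proof. by []. Qed.
Lemma val_sum (I : Type) (r : seq I) (P : pred I) (F : I -> Kt) :
  val (\sum_(i <- r | P i) F i) = \sum_(i <- r | P i) val (F i).
Proof. by apply: (big_morph val) => //. Qed.
Lemma val_natX m : val (m%:R : Kt) = m%:R.
Proof. by elim: m => // m IH; rewrite !mulrS valD IH. Qed.

Lemma ex_kinv (x : Kt) : exists y : A, (y \in K) && ((val x * y == 1) || (val x == 0)).
Proof.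
have [E|nz] := eqVneq (val x) 0; first by exists 0; rewrite K0 E /=; apply/orP; right.
by have [y Ky E] := Kinv (valP x) nz; exists y; rewrite Ky E eqxx.
Qed.
Lemma kinv_K x : xchoose (ex_kinv x) \in K.
Proof. by have /andP[] := xchooseP (ex_kinv x). Qed.
Definition kinv (x : Kt) : Kt :=
  if val x == 0 then (0 : Kt) else (exist (fun y => y \in K) (xchoose (ex_kinv x)) (kinv_K x) : Kt).
Lemma kmulV x : x != 0 -> kinv x * x = 1.
Proof.
move=> nz; have nz' : val x != 0 by apply: contra nz => /eqP H; apply/eqP/val_inj.
rewrite /kinv; case: ifPn => [E|_]; first by rewrite E in nz'.
apply: val_inj => /=.
have /andP[_ /orP[/eqP E|E0]] := xchooseP (ex_kinv x); last by rewrite E0 in nz'.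
by rewrite -(Kcomm _ (valP x)).
Qed.
Lemma kinv0 : kinv 0 = 0. Proof. by rewrite /kinv; case: ifPn => // /negP []; apply/eqP. Qed.
HB.instance Definition _ := GRing.ComNzRing_isField.Build Kt kmulV kinv0.


Lemma sum_supp1 (M : zmodType) z g (F : G -> A -> M) :
  (forall h, h != g -> F h (comp z h) = 0) -> F g 0 = 0 ->
  \sum_(h <- supp z) F h (comp z h) = F g (comp z g).
Proof.
move=> H0 Hg0; case: (boolP (g \in supp z)) => Hg.
  by rewrite (bigD1_seq g) //= ?supp_uniq // big1 ?addr0 // => h /H0.
rewrite supp_out // Hg0 big_seq big1 // => h Hh; apply: H0.
by apply: contraNneq Hg => <-.
Qed.

Lemma comp_hom a g : comp (comp a g) g = comp a g.
Proof. by rewrite comp_comp eqxx. Qed.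

Lemma hom_sum (M : zmodType) z d (F : G -> A -> M) :
  comp z d = z -> (forall h, F h 0 = 0) ->
  \sum_(h <- supp z) F h (comp z h) = F d z.
Proof.
move=> Hz H0; rewrite (sum_supp1 (g:=d)) ?Hz // => h hd.
by rewrite -Hz comp_comp (negbTE hd).
Qed.

Lemma comp_Kmul k y g : k \in K -> comp (k * y) g = k * comp y g.
Proof.
move=> Hk; rewrite -{1}(comp_sum y) mulr_sumr comp_big.
transitivity (\sum_(h <- supp y) k * comp (comp y h) g).
  apply: eq_bigr => h _.
  have := compM (Kcomp0 Hk) (comp_hom y h); rewrite add0r => Hh.
  rewrite -{1}Hh !comp_comp; case: ifP => _; first by rewrite Hh.
  by rewrite mulr0.
by rewrite -mulr_sumr -comp_big comp_sum.
Qed.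

Lemma opmul_hom u d b : comp u d = u -> opmul act comp supp u b = act d b * u.
Proof.
move=> Hu; rewrite /opmul.
by apply: (hom_sum (F := fun g x => act g b * x)) => // h; exact: mulr0.
Qed.

Lemma opmul_K u k : k \in K -> opmul act comp supp u k = k * u.
Proof.
move=> Hk; rewrite /opmul (eq_bigr (fun g => k * comp u g)) => [|g _].
  by rewrite -mulr_sumr comp_sum.
by rewrite Kact.
Qed.

Lemma opmul1 a : opmul act comp supp 1 a = a.
Proof. by rewrite (@opmul_hom 1 0) ?act0 ?mulr1 // comp1 eqxx. Qed.

Definition spanning n (v : 'I_n -> A) := forall a, exists c : 'I_n -> A,
  (forall i, c i \in K) /\ a = \sum_i c i * v i.
Definition indep n (v : 'I_n -> A) := forall c : 'I_n -> A,
  (forall i, c i \in K) -> \sum_i c i * v i = 0 -> forall i, c i = 0.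
Definition homog n (v : 'I_n -> A) (e : 'I_n -> G) := forall i, comp (v i) (e i) = v i.

Lemma basis_extract n v e : @homog n v e -> spanning v ->
  exists m (w : 'I_m -> A) (f : 'I_m -> G), [/\ homog w f, spanning w & indep w].
Proof.
elim: n v e => [|n IH] v e Hh Hs.
  by exists 0, v, e; split => // c _ _ [].
have [Hi|Hni] := Classical_Prop.classic (indep v); first by exists n.+1, v, e.
have [c [Kc [Hc0 [k Hk]]]] : exists c : 'I_n.+1 -> A, (forall i, c i \in K) /\
    \sum_i c i * v i = 0 /\ exists k, c k != 0.
  apply: Classical_Prop.NNPP => H; apply: Hni => c Kc Hc i.
  apply: Classical_Prop.NNPP => Hci; apply: H; exists c; split => //; split => //.
  by exists i; apply/eqP.
have [y Ky Hy] := Kinv (Kc k) Hk.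
apply: (IH (fun j => v (lift k j)) (fun j => e (lift k j))) => [j|a]; first exact: Hh.
have [d [Kd ->]] := Hs a.
have Hvk : v k = \sum_j (- (y * c (lift k j))) * v (lift k j).
  move: Hc0; rewrite (bigD1_ord k) //= => /eqP; rewrite addr_eq0 => /eqP H.
  transitivity (y * (c k * v k)); first by rewrite mulrA (Kcomm _ Ky) Hy mul1r.
  rewrite H mulrN mulr_sumr -sumrN; apply: eq_bigr => j _.
  by rewrite mulrA mulNr.
exists (fun j => d (lift k j) - d k * (y * c (lift k j))); split.
  by move=> j; apply: KB (Kd _) (KM (Kd _) (KM Ky (Kc _))).
rewrite (bigD1_ord k) //= Hvk mulr_sumr -big_split /=; apply: eq_bigr => j _.
by rewrite mulrBl mulNr mulrN mulrA addrC.
Qed.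

Lemma sum_supp_sub (M : zmodType) z (D : seq G) (F : G -> A -> M) :
  uniq D -> {subset supp z <= D} -> (forall h, F h 0 = 0) ->
  \sum_(h <- supp z) F h (comp z h) = \sum_(h <- D) F h (comp z h).
Proof.
move=> uD sub H0; symmetry.
rewrite (bigID (fun h => h \in supp z)) /= [X in _ + X]big1 ?addr0; last first.
  by move=> h /supp_out ->.
rewrite -big_filter; apply: perm_big; apply: uniq_perm.
- exact: filter_uniq.
- exact: supp_uniq.
- move=> h; rewrite mem_filter; case Hh: (h \in supp z) => //=.
  by rewrite sub.
Qed.

Lemma exists_hspan : exists n (v : 'I_n -> A) (e : 'I_n -> G), homog v e /\ spanning v.
Proof.
move: FD; rewrite /findim_over => -[s Hs].
pose D := undup (flatten (map supp s)).
pose I := ('I_(size s) * 'I_(size D))%type.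
pose w (p : I) := comp s`_p.1 D`_p.2.
pose f (p : I) := D`_p.2.
suff [Hh Hs'] : (forall p, comp (w p) (f p) = w p) /\
   (forall a, exists c : I -> A, (forall p, c p \in K) /\ a = \sum_p c p * w p).
  exists #|{: I}|, (fun k => w (enum_val k)), (fun k => f (enum_val k)).
  split => [k|a]; first exact: Hh.
  have [c [Kc ->]] := Hs' a; exists (fun k => c (enum_val k)); split => //.
  rewrite (reindex (@enum_val I predT)) //=; exact: onW_bij _ (@enum_val_bij _).
split => [p|a]; first by rewrite /w /f comp_hom.
have [c [/allP Kc ->]] := Hs a.
exists (fun p : I => c`_p.1); split.
  move=> p; case: (ltnP p.1 (size c)) => H; first by apply: Kc; exact: mem_nth.
  by rewrite nth_default // K0.
transitivity (\sum_(i < size s) \sum_(j < size D) c`_i * comp s`_i D`_j).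
  apply: eq_bigr => i _; rewrite -mulr_sumr; congr (_ * _).
  rewrite -{1}(comp_sum s`_i) (sum_supp_sub (F := fun h x => x) (D:=D)) //.
  - by rewrite (big_nth 0) big_mkord.
  - exact: undup_uniq.
  - move=> h Hh; rewrite mem_undup; apply/flattenP; exists (supp s`_i) => //.
    by apply: map_f; apply: mem_nth.
by rewrite pair_big /=.
Qed.

Lemma idem_tr0 (F : fieldType) m (E : 'M[F]_m) :
  (forall k, (0 < k)%N -> k%:R != 0 :> F) -> E *m E = E -> \tr E = 0 -> E = 0.
Proof.
move=> ch EE tr0; apply/eqP; rewrite -mxrank_eq0.
have def := mulmx_ebase E.
set L := col_ebase E in def; set U := row_ebase E in def; set r := \rank E in def *.
set P := (pid_mx r : 'M[F]_m) in def.
have uL : L \in unitmx by exact: col_ebase_unit.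
have uU : U \in unitmx by exact: row_ebase_unit.
have PQP : P *m U *m L *m P = P.
  have H : L *m (P *m (U *m L) *m P) *m U = L *m P *m U.
    by rewrite def -{1}EE -def !mulmxA.
  have := congr1 (fun X => invmx L *m X *m invmx U) H.
  by rewrite /= !mulmxA mulVmx // mul1mx !mulmxK // mulVmx // mul1mx.
have rm : (r <= m)%N by exact: rank_leq_row.
have PP : P *m P = P by rewrite /P pid_mx_id.
have trP : \tr P = 0.
  rewrite -tr0 -def -mulmxA mxtrace_mulC -{2}PP -!mulmxA mxtrace_mulC.
  by rewrite !mulmxA PQP.
case: (posnP r) => [//|r0].
have m0 : (0 < m)%N by apply: leq_trans rm.
have H : ((\sum_(i < m) ((i < r)%N : nat))%:R : F) = 0.
  transitivity (\tr P); last exact: trP.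
  rewrite natr_sum /mxtrace; apply: eq_bigr => i _.
  by rewrite /P mxE eqxx.
have pos : (0 < \sum_(i < m) ((i < r)%N : nat))%N.
  by rewrite (bigD1 (Ordinal m0)) //= r0.
by move/eqP: H; rewrite (negbTE (ch _ pos)).
Qed.

Lemma Kt_char k : (0 < k)%N -> k%:R != 0 :> Kt.
Proof.
move=> k0; apply/eqP => /(congr1 val); rewrite val_natX val0 => H.
have Hc : (k%:R : CC) != 0 by rewrite pnatr_eq0 -lt0n.
have : (1 : A) = 0.
  by rewrite -(scale1r (1 : A)) -(mulVf Hc) -scalerA scaler_nat H scaler0.
by move/eqP; rewrite oner_eq0.
Qed.

Section Basis.
Variables (n : nat) (v : 'I_n -> A) (e : 'I_n -> G).
Hypotheses (Hh : homog v e) (Hs : spanning v) (Hi : indep v).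

Lemma ex_coord a : exists c : {ffun 'I_n -> A},
  [forall i, c i \in K] && (a == \sum_i c i * v i).
Proof.
have [c [Kc E]] := Hs a; exists (finfun c); apply/andP; split.
  by apply/forallP => i; rewrite ffunE.
by rewrite E; apply/eqP; apply: eq_bigr => i _; rewrite ffunE.
Qed.
Definition coord a : 'I_n -> A := xchoose (ex_coord a).
Lemma coordK a i : coord a i \in K.
Proof. by have /andP[/forallP H _] := xchooseP (ex_coord a); apply: H. Qed.
Lemma coordE a : a = \sum_i coord a i * v i.
Proof. by have /andP[_ /eqP H] := xchooseP (ex_coord a). Qed.
Lemma coord_uniq a c : (forall i, c i \in K) -> a = \sum_i c i * v i ->
  forall i, coord a i = c i.
Proof.
move=> Kc Ea i.
have H0 : forall j, coord a j - c j = 0.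
  apply: (Hi (c := fun j => coord a j - c j)) => [j|].
    by apply: KB (coordK _ _) (Kc _).
  rewrite (eq_bigr (fun j => coord a j * v j - c j * v j)) => [|j _]; last by rewrite mulrBl.
  by rewrite sumrB -coordE -Ea subrr.
by apply/eqP; rewrite -subr_eq0 H0.
Qed.
Lemma coordD a b i : coord (a + b) i = coord a i + coord b i.
Proof.
apply: (coord_uniq (c := fun j => coord a j + coord b j)) => [j|]; first by apply: KD; apply: coordK.
rewrite {1}(coordE a) {1}(coordE b) -big_split; apply: eq_bigr => j _.
by rewrite mulrDl.
Qed.
Lemma coord0 i : coord 0 i = 0.
Proof.
apply: (coord_uniq (c := fun _ => 0)) => [j|]; first exact: K0.
by rewrite big1 // => j _; rewrite mul0r.
Qed.
Lemma coordKM k a i : k \in K -> coord (k * a) i = k * coord a i.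
Proof.
move=> Hk; apply: (coord_uniq (c := fun j => k * coord a j)) => [j|]; first by apply: KM Hk (coordK _ _).
rewrite {1}(coordE a) mulr_sumr; apply: eq_bigr => j _; by rewrite mulrA.
Qed.
Lemma coord_sum (I : Type) (r : seq I) (P : pred I) (F : I -> A) i :
  coord (\sum_(j <- r | P j) F j) i = \sum_(j <- r | P j) coord (F j) i.
Proof. by apply: (big_morph (fun x => coord x i)) => [x y|]; rewrite ?coordD ?coord0. Qed.
Lemma coord_hom w g i : comp w g = w -> e i != g -> coord w i = 0.
Proof.
move=> Hw Hne.
have E : w = \sum_j (if e j == g then coord w j else 0) * v j.
  rewrite -{1}Hw {1}(coordE w) comp_big; apply: eq_bigr => j _.
  rewrite comp_Kmul ?coordK // -{1}(Hh j) comp_comp eq_sym.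
  by case: ifP => _; [rewrite Hh | rewrite mulr0 mul0r].
rewrite (coord_uniq _ E) ?(negbTE Hne) // => j.
by case: ifP => _; [exact: coordK | exact: K0].
Qed.
Lemma coord_mul w y k :
  coord (w * y) k = \sum_j coord w j * coord (v j * y) k.
Proof.
apply: (coord_uniq (c := fun k => \sum_j coord w j * coord (v j * y) k)) => [k'|].
  by apply: Ksum => j _; apply: KM; apply: coordK.
rewrite {1}(coordE w) mulr_suml.
under [RHS]eq_bigr do rewrite mulr_suml.
rewrite [RHS]exchange_big /=; apply: eq_bigr => j _.
transitivity (coord w j * \sum_k coord (v j * y) k * v k).
  by rewrite -coordE mulrA.
by rewrite mulr_sumr; apply: eq_bigr => k' _; rewrite mulrA.
Qed.

Definition Tra z := \sum_i coord (v i * z) i.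
Lemma TraK z : Tra z \in K.
Proof. by apply: Ksum => i _; apply: coordK. Qed.
Lemma TraD x y : Tra (x + y) = Tra x + Tra y.
Proof. by rewrite /Tra -big_split; apply: eq_bigr => i _; rewrite mulrDr coordD. Qed.
Lemma Tra0 : Tra 0 = 0.
Proof. by rewrite /Tra big1 // => i _; rewrite mulr0 coord0. Qed.
Lemma TraB x y : Tra (x - y) = Tra x - Tra y.
Proof. by apply/eqP; rewrite eq_sym subr_eq -TraD subrK. Qed.
Lemma Tra_sum (I : Type) (r : seq I) (P : pred I) (F : I -> A) :
  Tra (\sum_(j <- r | P j) F j) = \sum_(j <- r | P j) Tra (F j).
Proof. by apply: (big_morph Tra) => [x y|]; rewrite ?TraD ?Tra0. Qed.
Lemma TraKM k z : k \in K -> Tra (k * z) = k * Tra z.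
Proof.
move=> Hk; rewrite /Tra mulr_sumr; apply: eq_bigr => i _.
by rewrite mulrA -(Kcomm _ Hk) -mulrA coordKM.
Qed.
Lemma Tra_comm x y : Tra (x * y) = Tra (y * x).
Proof.
rewrite /Tra.
under eq_bigr do rewrite mulrA coord_mul.
under [RHS]eq_bigr do rewrite mulrA coord_mul.
rewrite exchange_big; apply: eq_bigr => i _; apply: eq_bigr => j _.
exact: Kcomm (coordK _ _).
Qed.
Lemma Tra_hom0 z d : comp z d = z -> d != 0 -> Tra z = 0.
Proof.
move=> Hz d0; rewrite /Tra big1 // => i _.
apply: (coord_hom (g := e i + d)); first exact: compM.
by rewrite -{1}(addr0 (e i)) (inj_eq (addrI _)) eq_sym.
Qed.
Lemma TraH z w d : comp w d = w -> Tra (z * w) = Tra (comp z (- d) * w).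
Proof.
move=> Hw; rewrite -{1}(comp_sum z) mulr_suml Tra_sum.
apply: (sum_supp1 (F := fun h x => Tra (x * w))) => [h hd|]; last by rewrite mul0r Tra0.
apply: (Tra_hom0 (d := h + d)); first exact: compM (comp_hom _ _) Hw.
by rewrite addr_eq0.
Qed.

Definition rad : pred A := fun z => [forall k, Tra (z * v k) == 0].
Lemma rad_all z : z \in rad -> forall y, Tra (z * y) = 0.
Proof.
move=> /forallP H y; rewrite (coordE y) mulr_sumr Tra_sum big1 // => i _.
rewrite mulrA -(Kcomm _ (coordK y i)) -mulrA TraKM ?coordK //.
by rewrite (eqP (H i)) mulr0.
Qed.
Lemma rad_ideal : left_ideal rad.
Proof.
split.
- by apply/forallP => k; rewrite mul0r Tra0.
- move=> x y /forallP Hx /forallP Hy; apply/forallP => k.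
  by rewrite mulrDl TraD (eqP (Hx k)) (eqP (Hy k)) addr0.
- move=> a x Hx; apply/forallP => k.
  by rewrite -mulrA Tra_comm -mulrA rad_all.
Qed.

Definition kc (x : A) (j : 'I_n) : Kt := exist (fun y => y \in K) (coord x j) (coordK x j).

Lemma idem_zero e0 : e0 * e0 = e0 -> Tra e0 = 0 -> e0 = 0.
Proof.
move=> ee Te.
pose E : 'M[Kt]_n := \matrix_(i, j) kc (v i * e0) j.
have EE : E *m E = E.
  apply/matrixP => i j; apply: val_inj; rewrite !mxE val_sum /=.
  rewrite -[in RHS]ee mulrA coord_mul; apply: eq_bigr => k _.
  by rewrite /E !mxE.
have trE : \tr E = 0.
  apply: val_inj; rewrite val0 -Te /mxtrace val_sum /Tra; apply: eq_bigr => i _.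
  by rewrite mxE.
have E0 := idem_tr0 Kt_char EE trE.
have vi0 i : v i * e0 = 0.
  rewrite (coordE (v i * e0)) big1 // => j _.
  have := congr1 (fun M : 'M[Kt]_n => val (M i j)) E0.
  by rewrite /= !mxE /= => ->; rewrite mul0r.
rewrite -(mul1r e0) (coordE 1) mulr_suml big1 // => i _.
by rewrite -mulrA vi0 mulr0.
Qed.

Lemma nondeg z : (forall k, Tra (z * v k) = 0) -> z = 0.
Proof.
move=> H.
have Hz : z \in rad by apply/forallP => k; rewrite H.
move: SS; rewrite /semisimple_alg => /(_ _ rad_ideal) [J [[J0 JD JM] Hd Hc]].
have [R0 RD RM] := rad_ideal.
have [e0 [f0 [He Hf E1]]] := Hc 1.
have idem x : x \in rad -> x = x * e0.
  move=> Hx.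
  have Hxf : x * f0 = x + (- x) * e0.
    by rewrite mulNr -{2}[x]mulr1 E1 mulrDr addrAC subrr add0r.
  have Hxf0 : x * f0 = 0.
    apply: Hd; last exact: JM.
    by rewrite Hxf; apply: RD => //; apply: RM.
  by rewrite -{1}[x]mulr1 E1 mulrDr Hxf0 addr0.
have ee : e0 * e0 = e0 by rewrite -idem.
have Te : Tra e0 = 0 by rewrite -[e0]mulr1 rad_all.
by rewrite (idem _ Hz) (idem_zero ee Te) mulr0.
Qed.



Definition Tm : 'M[Kt]_n :=
  \matrix_(i, j) (exist (fun y => y \in K) (Tra (v i * v j)) (TraK _) : Kt).
Lemma Tm_unit : Tm \in unitmx.
Proof.
rewrite -row_free_unit -kermx_eq0; apply/eqP/row_matrixP => i; rewrite row0.
set w := row i (kermx Tm).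
have wT : w *m Tm = 0 by rewrite /w -row_mul mulmx_ker row0.
pose z := \sum_j val (w 0 j) * v j.
have z0 : z = 0.
  apply: nondeg => k; rewrite /z mulr_suml Tra_sum.
  transitivity (val ((w *m Tm) 0 k)); last by rewrite wT mxE.
  rewrite mxE val_sum; apply: eq_bigr => j _.
  by rewrite -mulrA (TraKM _ (valP (w 0 j))) /Tm !mxE.
apply/rowP => j; apply: val_inj.
have H := Hi (c := fun j => val (w 0 j)) (fun j => valP _) z0 j.
by rewrite /= H mxE.
Qed.

Definition Ti := invmx Tm.
Definition u0 j := \sum_k val (Ti j k) * v k.
Definition u j := comp (u0 j) (- e j).

Lemma Tra_u0 j l : Tra (u0 j * v l) = (j == l)%:R.
Proof.
rewrite /u0 mulr_suml Tra_sum.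
transitivity (val ((Ti *m Tm) j l)); last by rewrite mulVmx ?Tm_unit // mxE val_natX.
rewrite mxE val_sum; apply: eq_bigr => k _.
by rewrite -mulrA (TraKM _ (valP (Ti j k))) /Tm !mxE.
Qed.
Lemma u_hom j : comp (u j) (- e j) = u j.
Proof. by rewrite /u comp_hom. Qed.
Lemma Tra_u j l : Tra (u j * v l) = (j == l)%:R.
Proof.
rewrite (TraH _ (Hh l)).
case: (eqVneq (e l) (e j)) => [El|Ne].
  by rewrite El u_hom /u -El -(TraH _ (Hh l)) Tra_u0.
have -> : (j == l) = false by apply/negbTE; apply: contraNneq Ne => ->.
by rewrite /u comp_comp (inj_eq (@oppr_inj _)) (negbTE Ne) mul0r Tra0.
Qed.
Lemma Tra_dual y j : Tra (u j * y) = coord y j.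
Proof.
rewrite {1}(coordE y) mulr_sumr Tra_sum (bigD1 j) //= big1 => [|l lj].
  by rewrite mulrA -(Kcomm _ (coordK y j)) -mulrA TraKM ?coordK // Tra_u eqxx mulr1 addr0.
by rewrite mulrA -(Kcomm _ (coordK y l)) -mulrA TraKM ?coordK // Tra_u eq_sym (negbTE lj) mulr0.
Qed.
Lemma casimir a j : a * u j = \sum_i coord (v i * a) j * u i.
Proof.
apply/eqP; rewrite -subr_eq0; apply/eqP; apply: nondeg => k.
rewrite mulrBl TraB; apply/eqP; rewrite subr_eq0; apply/eqP.
rewrite -mulrA Tra_comm -mulrA Tra_dual.
rewrite mulr_suml Tra_sum (bigD1 k) //= big1 => [|i ik].
  by rewrite -mulrA TraKM ?coordK // Tra_u eqxx mulr1 addr0.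
by rewrite -mulrA TraKM ?coordK // Tra_u (negbTE ik) mulr0.
Qed.
Lemma sum_uv : \sum_i u i * v i = 1.
Proof.
apply/eqP; rewrite -subr_eq0; apply/eqP; apply: nondeg => k.
rewrite mulrBl TraB mul1r mulr_suml Tra_sum.
under eq_bigr do rewrite -mulrA Tra_dual.
by rewrite [Tra (v k)]/Tra subrr.
Qed.

End Basis.

Lemma zero_add (M : zmodType) (x : M) : x + x = x -> x = 0.
Proof. by move/(congr1 (fun y => y - x)); rewrite addrK subrr. Qed.

Section Mod.
Variables (M : zmodType) (rho sig : M -> A -> M).
Hypothesis HM : is_rBmod act comp supp K rho sig.

Lemma rhoDl m m' a : rho (m + m') a = rho m a + rho m' a. Proof. by case: HM. Qed.
Lemma rhoDr m a a' : rho m (a + a') = rho m a + rho m a'. Proof. by case: HM. Qed.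
Lemma sigDl m m' b : sig (m + m') b = sig m b + sig m' b. Proof. by case: HM. Qed.
Lemma sigDr m b b' : sig m (b + b') = sig m b + sig m b'. Proof. by case: HM. Qed.
Lemma rhoMul m a a' : rho (rho m a) a' = rho m (opmul act comp supp a a').
Proof. by case: HM => _ _ _ _ [_ _ []]. Qed.
Lemma sigMul m b b' : sig (sig m b) b' = sig m (b * b').
Proof. by case: HM => _ _ _ _ [_ _ []]. Qed.
Lemma rho_sig m b a' : rho (sig m b) a'
   = \sum_(g <- supp b) sig (rho m (act g a')) (comp b g).
Proof. by case: HM => _ _ _ _ [_ _ []]. Qed.
Lemma rho_sigK m k : k \in K -> rho m k = sig m k.
Proof. by case: HM => _ _ _ _ [_ _ []] _ _ _ H; apply: H. Qed.
Lemma sig1 m : sig m 1 = m.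
Proof. by case: HM => _ _ _ _ [_ H _]; apply: H. Qed.

Lemma rho0l a : rho 0 a = 0. Proof. by apply: zero_add; rewrite -rhoDl addr0. Qed.
Lemma rho0r m : rho m 0 = 0. Proof. by apply: zero_add; rewrite -rhoDr addr0. Qed.
Lemma sig0l b : sig 0 b = 0. Proof. by apply: zero_add; rewrite -sigDl addr0. Qed.
Lemma sig0r m : sig m 0 = 0. Proof. by apply: zero_add; rewrite -sigDr addr0. Qed.

Lemma rho_suml (I : Type) (r : seq I) (P : pred I) (F : I -> M) a :
  rho (\sum_(i <- r | P i) F i) a = \sum_(i <- r | P i) rho (F i) a.
Proof. by apply: (big_morph (rho^~ a)) => [x y|]; rewrite ?rhoDl ?rho0l. Qed.
Lemma rho_sumr (I : Type) (r : seq I) (P : pred I) (F : I -> A) m :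
  rho m (\sum_(i <- r | P i) F i) = \sum_(i <- r | P i) rho m (F i).
Proof. by apply: (big_morph (rho m)) => [x y|]; rewrite ?rhoDr ?rho0r. Qed.
Lemma sig_suml (I : Type) (r : seq I) (P : pred I) (F : I -> M) a :
  sig (\sum_(i <- r | P i) F i) a = \sum_(i <- r | P i) sig (F i) a.
Proof. by apply: (big_morph (sig^~ a)) => [x y|]; rewrite ?sigDl ?sig0l. Qed.
Lemma sig_sumr (I : Type) (r : seq I) (P : pred I) (F : I -> A) m :
  sig m (\sum_(i <- r | P i) F i) = \sum_(i <- r | P i) sig m (F i).
Proof. by apply: (big_morph (sig m)) => [x y|]; rewrite ?sigDr ?sig0r. Qed.

Lemma rho_sig_hom m b a d : comp b d = b ->
  rho (sig m b) a = sig (rho m (act d a)) b.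
Proof.
move=> Hb; rewrite rho_sig.
by apply: (hom_sum (F := fun g x => sig (rho m (act g a)) x)) => // h; exact: sig0r.
Qed.
Lemma sig_K m k w : k \in K -> sig m (k * w) = sig (rho m k) w.
Proof. by move=> Hk; rewrite -sigMul rho_sigK. Qed.
Lemma rho_K m x k : k \in K -> rho (rho m x) k = rho m (k * x).
Proof. by move=> Hk; rewrite rhoMul opmul_K. Qed.
End Mod.

Lemma main_proj : rB_projective act comp supp K (A_rho act comp supp) (@A_sig A).
Proof.
have [n0 [v0 [e0 [Hh0 Hs0]]]] := exists_hspan.
have [n [v [e [Hh Hs Hi]]]] := basis_extract Hh0 Hs0.
move=> M N rhoM sigM rhoN sigN p f HM HN Hp psurj Hf.
move: Hp; rewrite /is_rBhom => -[pD prho psig].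
move: Hf; rewrite /is_rBhom => -[fD frho fsig].
pose y := f 1.
have yinv a : rhoN y a = sigN y a.
  by rewrite /y -frho -fsig /A_rho /A_sig opmul1 mul1r.
have [x0 px0] := psurj y.
pose uu := u e Hs.
pose x := \sum_i sigM (rhoM x0 (uu i)) (v i).
have p0 : p 0 = 0 by apply: zero_add; rewrite -pD addr0.
have psum (I : Type) (r : seq I) (P : pred I) (F : I -> M) :
    p (\sum_(i <- r | P i) F i) = \sum_(i <- r | P i) p (F i).
  by apply: (big_morph p) => [a b|]; rewrite ?pD ?p0.
have px : p x = y.
  rewrite /x psum (eq_bigr (fun i => sigN y (uu i * v i))) => [|i _].
    by rewrite -(sig_sumr HN) sum_uv // (sig1 HN).
  by rewrite psig prho px0 yinv (sigMul HN).
have xinv a : rhoM x a = sigM x a.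
  rewrite /x (rho_suml HM) (sig_suml HM).
  transitivity (\sum_i sigM (rhoM x0 (a * uu i)) (v i)).
    apply: eq_bigr => i _.
    rewrite (rho_sig_hom HM _ _ (Hh i)) (rhoMul HM) (opmul_hom _ (u_hom e Hs i)).
    by rewrite -actD addNr act0.
  symmetry; transitivity (\sum_i \sum_j sigM (rhoM x0 (coord Hs (v i * a) j * uu i)) (v j)).
    apply: eq_bigr => i _; rewrite (sigMul HM) {1}(coordE Hs (v i * a)) (sig_sumr HM).
    apply: eq_bigr => j _.
    by rewrite (sig_K HM _ _ (coordK _ _ _)) (rho_K HM _ _ (coordK _ _ _)).
  rewrite exchange_big /=; apply: eq_bigr => j _.
  by rewrite -(sig_suml HM) -(rho_sumr HM) /uu -(casimir Hh Hs Hi a j).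
exists (fun m => sigM x m); split.
  split.
  - by move=> m m'; rewrite (sigDr HM).
  - move=> m a; rewrite /A_rho /opmul (sig_sumr HM) (rho_sig HM).
    by apply: eq_bigr => g _; rewrite -(sigMul HM) xinv.
  - by move=> m b; rewrite /A_sig (sigMul HM).
by move=> m; rewrite psig px /y -fsig /A_sig mul1r.
Qed.

End Main.

Unset Implicit Arguments.

Theorem lemma6p2 (G : zmodType) (A : algType CC)
  (act : G -> A -> A) (comp : A -> G -> A) (supp : A -> seq G)
  (K : pred A) :
  is_YD_algebra act comp supp ->
  semisimple_alg A ->
  central_subfield K ->
  invariant_sub act comp K ->
  findim_over K ->
  rB_projective act comp supp K
    (A_rho act comp supp) (@A_sig A).
Proof. by move=> YD SS CK IK FD; apply: main_proj. Qed.
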